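(* Let $K$ be an uncountable algebraically closed field and let $(X_n,f_{nm})$ be a projective sequence of nonempty constructible sets over $K$. Then $\varprojlim X_n\neq\varnothing$.
   Context: $\mathbb N=\{0,1,2,\dots\}$. A projective sequence of sets $(X_n,f_{nm})$ is a sequence of sets $X_n$ ($n\in\mathbb N$) with maps $f_{nm}\colon X_m\to X_n$ for $m\ge n$ such that $f_{nn}=\mathrm{Id}$ and $f_{nk}=f_{nm}\circ f_{mk}$ for $k\ge m\ge n$; its projective limit is the set of $(x_n)\in\prod_n X_n$ with $x_n=f_{nm}(x_m)$ for all $m\ge n$. Affine algebraic sets over $K$ are zero sets of families of polynomials in some $K^m$, carrying the Zariski topology; regular maps are restrictions of polynomial maps. A subset of an affine algebraic set $A$ is locally closed if it is the intersection of an open and a closed subset of $A$, and constructible if it is a finite union of locally closed subsets. $(X_n,f_{nm})$ is a projective sequence of constructible sets over $K$ if there is a projective sequence $(A_n,F_{nm})$ of affine algebraic sets $A_n$ over $K$ and regular maps $F_{nm}\colon A_m\to A_n$ such that each $X_n$ is a constructible subset of $A_n$, $F_{nm}(X_m)\subset X_n$, and $f_{nm}$ is the restriction of $F_{nm}$ to $X_m$, for all $m\ge n$. *)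

(* Defs.v *)
From HB Require Import structures.
From mathcomp Require Import all_boot all_order all_algebra.
Set Implicit Arguments. Unset Strict Implicit. Unset Printing Implicit Defensive.
Import GRing.Theory.
Local Open Scope ring_scope.

(* Polynomial expressions in the m variables x_0, ..., x_(m-1) with
   coefficients in K (syntax; they are only used through evaluation). *)
Inductive mpoly (K : Type) (m : nat) : Type :=
| PVar of 'I_m
| PConst of K
| PAdd of mpoly K m & mpoly K m
| PMul of mpoly K m & mpoly K m
| POpp of mpoly K m.

Fixpoint meval (K : nzRingType) (m : nat) (x : 'rV[K]_m) (p : mpoly K m) : K :=
  match p with
  | PVar i => x 0 i
  | PConst c => c
  | PAdd p q => meval x p + meval x q
  | PMul p q => meval x p * meval x q
  | POpp p => - meval x p
  end.

Section Zariski.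
Variables (K : nzRingType) (m : nat).

Definition zero_set (S : mpoly K m -> Prop) : 'rV[K]_m -> Prop :=
  fun x => forall p, S p -> meval x p = 0.

Definition algebraic_set (A : 'rV[K]_m -> Prop) : Prop :=
  exists S, forall x, A x <-> zero_set S x.

Definition closed_in (A C : 'rV[K]_m -> Prop) : Prop :=
  exists S, forall x, C x <-> (A x /\ zero_set S x).

Definition open_in (A U : 'rV[K]_m -> Prop) : Prop :=
  exists C, closed_in A C /\ forall x, U x <-> (A x /\ ~ C x).

Definition locally_closed_in (A L : 'rV[K]_m -> Prop) : Prop :=
  exists U C, open_in A U /\ closed_in A C /\ forall x, L x <-> (U x /\ C x).

Definition constructible_in (A X : 'rV[K]_m -> Prop) : Prop :=
  exists (k : nat) (L : 'I_k -> 'rV[K]_m -> Prop),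
    (forall i, locally_closed_in A (L i)) /\
    forall x, X x <-> exists i, L i x.
End Zariski.

Definition poly_map (K : nzRingType) (a b : nat) (P : 'I_b -> mpoly K a)
  (x : 'rV[K]_a) : 'rV[K]_b := \row_j meval x (P j).

Definition regular_map (K : nzRingType) (a b : nat)
  (A : 'rV[K]_a -> Prop) (B : 'rV[K]_b -> Prop) (f : 'rV[K]_a -> 'rV[K]_b) : Prop :=
  (forall x, A x -> B (f x)) /\
  exists P : 'I_b -> mpoly K a, forall x, A x -> f x = poly_map P x.

Definition uncountable (T : Type) : Prop :=
  ~ exists f : nat -> T, forall y, exists n, f n = y.

(* Main.v *)
Require Import Defs.
From HB Require Import structures.
From mathcomp Require Import all_boot all_order all_algebra all_field.
From Stdlib Require Import Classical ClassicalEpsilon.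
Set Implicit Arguments. Unset Strict Implicit. Unset Printing Implicit Defensive.
Import GRing.Theory.
Local Open Scope ring_scope.



Section Logic.
Variable K : closedFieldType.
Implicit Types (e : seq K).

Fixpoint ub_form (f : GRing.formula K) : nat :=
  match f with
  | GRing.Bool _ => 0
  | GRing.Equal t1 t2 => maxn (GRing.ub_var t1) (GRing.ub_var t2)
  | GRing.Unit t => GRing.ub_var t
  | GRing.And f1 f2 | GRing.Or f1 f2 | GRing.Implies f1 f2 => maxn (ub_form f1) (ub_form f2)
  | GRing.Not f1 => ub_form f1
  | GRing.Exists i f1 | GRing.Forall i f1 => maxn i.+1 (ub_form f1)
  end%N.

Lemma eval_agree (t : GRing.term K) e e' :
  (forall j, (j < GRing.ub_var t)%N -> e`_j = e'`_j) -> GRing.eval e t = GRing.eval e' t.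
Proof.
elim: t => //=.
- by move=> i H; apply: H.
- by move=> t1 IH1 t2 IH2 H; rewrite IH1 ?IH2 // => j Hj; apply: H; rewrite leq_max Hj ?orbT.
- by move=> t1 IH1 H; rewrite IH1.
- by move=> t1 IH1 n H; rewrite IH1.
- by move=> t1 IH1 t2 IH2 H; rewrite IH1 ?IH2 // => j Hj; apply: H; rewrite leq_max Hj ?orbT.
- by move=> t1 IH1 H; rewrite IH1.
- by move=> t1 IH1 n H; rewrite IH1.
Qed.

Lemma holds_agree (f : GRing.formula K) e e' :
  (forall j, (j < ub_form f)%N -> e`_j = e'`_j) -> (GRing.holds e f <-> GRing.holds e' f).
Proof.
elim: f e e' => /=.
- by [].
- move=> t1 t2 e e' H; rewrite (@eval_agree t1 e e') ?(@eval_agree t2 e e') //.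
  + by move=> j Hj; apply: H; rewrite leq_max Hj orbT.
  + by move=> j Hj; apply: H; rewrite leq_max Hj.
- by move=> t e e' H; rewrite (@eval_agree t e e').
- move=> f1 IH1 f2 IH2 e e' H.
  rewrite (IH1 e e') ?(IH2 e e') //.
  + by move=> j Hj; apply: H; rewrite leq_max Hj orbT.
  + by move=> j Hj; apply: H; rewrite leq_max Hj.
- move=> f1 IH1 f2 IH2 e e' H.
  rewrite (IH1 e e') ?(IH2 e e') //.
  + by move=> j Hj; apply: H; rewrite leq_max Hj orbT.
  + by move=> j Hj; apply: H; rewrite leq_max Hj.
- move=> f1 IH1 f2 IH2 e e' H.
  rewrite (IH1 e e') ?(IH2 e e') //.
  + by move=> j Hj; apply: H; rewrite leq_max Hj orbT.
  + by move=> j Hj; apply: H; rewrite leq_max Hj.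
- by move=> f1 IH1 e e' H; rewrite (IH1 e e').
- move=> i f1 IH1 e e' H; split=> -[x Hx]; exists x.
  + apply/(IH1 (set_nth 0 e i x)) => // j Hj; rewrite !nth_set_nth /=.
    by case: eqP => // _; apply: H; rewrite leq_max Hj orbT.
  + apply/(IH1 _ (set_nth 0 e' i x)) => // j Hj; rewrite !nth_set_nth /=.
    by case: eqP => // _; apply: H; rewrite leq_max Hj orbT.
- move=> i f1 IH1 e e' H; split=> Hx x.
  + apply/(IH1 (set_nth 0 e i x)) => // j Hj; rewrite !nth_set_nth /=.
    by case: eqP => // _; apply: H; rewrite leq_max Hj orbT.
  + apply/(IH1 _ (set_nth 0 e' i x)) => // j Hj; rewrite !nth_set_nth /=.
    by case: eqP => // _; apply: H; rewrite leq_max Hj orbT.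
Qed.

(* finite or cofinite predicates *)
Definition FC (P : K -> Prop) := exists (l : seq K) (b : bool), forall a, P a <-> ((a \in l) != b).

Lemma FC_ext P Q : (forall a, P a <-> Q a) -> FC P -> FC Q.
Proof. by move=> H [l [b Hl]]; exists l, b; move=> a; rewrite -H. Qed.

Lemma FC_const (b : bool) : FC (fun _ => b).
Proof. by exists (Nil K), b; move=> a; rewrite in_nil; case: b. Qed.

Lemma FC_not P : FC P -> FC (fun a => ~ P a).
Proof.
move=> [l [b Hl]]; exists l, (~~ b); move=> a; rewrite Hl.
by case: (a \in l); case: (b); split => //= H; apply: H.

Qed.

Lemma FC_and P Q : FC P -> FC Q -> FC (fun a => P a /\ Q a).
Proof.
move=> [l1 [b1 H1]] [l2 [b2 H2]].
case: b1 H1 => H1.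
- case: b2 H2 => H2.
  + exists (l1 ++ l2), true; move=> a; rewrite H1 H2 mem_cat (rwP andP).
    by case: (a \in l1); case: (a \in l2).
  + exists [seq a <- l2 | ~~ (a \in l1)]; exists false; move=> a; rewrite H1 H2 mem_filter (rwP andP).
    by case: (a \in l1); case: (a \in l2).
- exists [seq a <- l1 | (a \in l2) != b2]; exists false; move=> a; rewrite H1 H2 mem_filter (rwP andP).
  by case: (a \in l1); case: ((a \in l2) != b2).
Qed.

Lemma FC_or P Q : FC P -> FC Q -> FC (fun a => P a \/ Q a).
Proof.
move=> HP HQ; apply: (FC_ext _ (FC_not (FC_and (FC_not HP) (FC_not HQ)))).
by move=> a; split; [apply: NNPP; tauto | tauto].
Qed.

Section Tpoly.
Variable s : seq K.
Fixpoint tpoly (t : GRing.term K) : {poly K} :=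
  match t with
  | GRing.Var j => if j == size s then 'X else (s`_j)%:P
  | GRing.Const c => c%:P
  | GRing.NatConst n => n%:R
  | GRing.Add t1 t2 => tpoly t1 + tpoly t2
  | GRing.Opp t1 => - tpoly t1
  | GRing.NatMul t1 n => tpoly t1 *+ n
  | GRing.Mul t1 t2 => tpoly t1 * tpoly t2
  | GRing.Inv _ => 0
  | GRing.Exp t1 n => tpoly t1 ^+ n
  end.

Lemma tpolyP t a : GRing.rterm t -> GRing.eval (rcons s a) t = (tpoly t).[a].
Proof.
elim: t => /=.
- move=> j _; rewrite nth_rcons; case: ltnP => Hj.
  + by rewrite (ltn_eqF Hj) hornerC.
  + case: eqP => [_|_]; first by rewrite hornerX.
    by rewrite nth_default // hornerC.
- by move=> c _; rewrite hornerC.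
- by move=> n _; rewrite -polyC_natr hornerC.
- by move=> t1 IH1 t2 IH2 /andP[r1 r2]; rewrite IH1 // IH2 // hornerD.
- by move=> t1 IH1 r1; rewrite IH1 // hornerN.
- by move=> t1 IH1 n r1; rewrite IH1 // hornerMn.
- by move=> t1 IH1 t2 IH2 /andP[r1 r2]; rewrite IH1 // IH2 // hornerM.
- by [].
- by move=> t1 IH1 n r1; rewrite IH1 // horner_exp.
Qed.
End Tpoly.

Lemma FC_root (p : {poly K}) : FC (fun a => root p a).
Proof.
have [->|p0] := eqVneq p 0.
  by apply: (FC_ext _ (FC_const true)) => a; rewrite root0.
have [r Hr] := closed_field_poly_normal p.
exists r, false; move=> a; rewrite {1}Hr rootZ ?lead_coef_eq0 //.
by rewrite root_prod_XsubC; case: (a \in r).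
Qed.

Lemma FC_qf (s : seq K) f : GRing.qf_form f -> GRing.rformula f ->
  FC (fun a => GRing.qf_eval (rcons s a) f).
Proof.
elim: f => //=.
- by move=> b _ _; apply: FC_const.
- move=> t1 t2 _ /andP[r1 r2].
  apply: (FC_ext _ (FC_root (tpoly s t1 - tpoly s t2))) => a.
  by rewrite !tpolyP // rootE hornerD hornerN subr_eq0.
- move=> t1 IH1 t2 IH2 /andP[q1 q2] /andP[r1 r2].
  apply: (FC_ext _ (FC_and (IH1 q1 r1) (IH2 q2 r2))) => a.
  by split; [case=> -> ->|case/andP=> -> ->].
- move=> t1 IH1 t2 IH2 /andP[q1 q2] /andP[r1 r2].
  apply: (FC_ext _ (FC_or (IH1 q1 r1) (IH2 q2 r2))) => a.
  by split; [case=> ->; rewrite ?orbT | case/orP=> ->; auto].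
- move=> t1 IH1 t2 IH2 /andP[q1 q2] /andP[r1 r2].
  apply: (FC_ext _ (FC_or (FC_not (IH1 q1 r1)) (IH2 q2 r2))) => a.
  split; first by case=> [/negP/negbTE -> | ->] //; rewrite implybT.
  by case: (GRing.qf_eval _ t1) => /= H; [right | left].
- move=> t1 IH1 q1 r1.
  apply: (FC_ext _ (FC_not (IH1 q1 r1))) => a.
  by split; [move/negP | move/negP].
Qed.

Definition qe (f : GRing.formula K) :=
  GRing.quantifier_elim (@ClosedFieldQE.ex_elim K) (GRing.to_rform f).

Lemma qeP e f : GRing.holds e f <-> GRing.qf_eval e (qe f).
Proof.
have H := @GRing.quantifier_elim_rformP K _ (@ClosedFieldQE.wf_ex_elim K)
  (ClosedFieldQE.holds_ex_elim (@solve_monicpoly K)) e _ (GRing.to_rform_rformula f).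
by rewrite -GRing.to_rformP; split => /H.
Qed.

Lemma FC_holds s f : FC (fun a => GRing.holds (rcons s a) f).
Proof.
have /andP[q r] := @GRing.quantifier_elim_wf K _ (@ClosedFieldQE.wf_ex_elim K) _
   (GRing.to_rform_rformula f).
by apply: (FC_ext _ (FC_qf s q r)) => a; rewrite qeP.
Qed.

End Logic.



Section Gen.
Variable R : comNzRingType.
Inductive gen (l : seq R) : R -> Prop :=
| gen0 : gen l 0
| genS x r y : x \in l -> gen l y -> gen l (r * x + y).

Definition Noeth := forall S : R -> Prop, exists l : seq R,
  (forall x, x \in l -> S x) /\ (forall x, S x -> gen l x).

Lemma gen_in l x : x \in l -> gen l x.
Proof. by move=> H; rewrite -[x]addr0 -[x]mul1r; apply: genS => //; apply: gen0. Qed.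

Lemma gen_add l x y : gen l x -> gen l y -> gen l (x + y).
Proof.
elim=> [|a r z Ha _ IH] Hy; first by rewrite add0r.
by rewrite -addrA; apply: genS => //; apply: IH.
Qed.

Lemma gen_mul l c x : gen l x -> gen l (c * x).
Proof.
elim=> [|a r z Ha _ IH]; first by rewrite mulr0; apply: gen0.
by rewrite mulrDr mulrA; apply: genS.
Qed.

Lemma gen_opp l x : gen l x -> gen l (- x).
Proof. by move=> H; rewrite -mulN1r; apply: gen_mul. Qed.

Lemma gen_trans l l' x : (forall y, y \in l -> gen l' y) -> gen l x -> gen l' x.
Proof.
move=> H; elim=> [|a r z Ha _ IH]; first exact: gen0.
by apply: gen_add => //; apply: gen_mul; apply: H.
Qed.

Lemma gen_sub l l' x : {subset l <= l'} -> gen l x -> gen l' x.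
Proof. by move=> H; apply: gen_trans => y /H; apply: gen_in. Qed.

Lemma gen_morph (S : Type) (f : R -> S) (P : S -> Prop) l x :
  P (f 0) -> (forall a r z, a \in l -> P (f z) -> P (f (r * a + z))) -> gen l x -> P (f x).
Proof. by move=> H0 HS; elim=> // a r z Ha _ IH; apply: HS. Qed.
End Gen.

Lemma Noeth_field (F : fieldType) : Noeth F.
Proof.
move=> S; case: (classic (exists x, S x /\ x != 0)) => [[x [Sx x0]]|H].
  exists [:: x]; split; first by move=> y; rewrite inE => /eqP->.
  move=> y _; rewrite -[y]addr0 -[y](divfK x0); apply: genS; rewrite ?inE //.
  exact: gen0.
exists [::]; split => // y Sy.
have -> : y = 0 by apply: NNPP => /eqP y0; apply: H; exists y.
exact: gen0.
Qed.

Lemma size_le_coef (R : nzRingType) (p : {poly R}) n :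
  (size p <= n.+1)%N -> p`_n = 0 -> (size p <= n)%N.
Proof.
move=> H1 H2; rewrite leqNgt; apply/negP => H3.
have Hs : size p = n.+1 by apply/eqP; rewrite eqn_leq H1 H3.
have : lead_coef p = 0 by rewrite lead_coefE Hs.
by move/eqP; rewrite lead_coef_eq0 => /eqP p0; rewrite p0 size_poly0 in Hs.
Qed.

Section Hilbert.
Variable R : comNzRingType.
Hypothesis HR : Noeth R.

Lemma Noeth_poly : Noeth {poly R}.
Proof.
move=> S.
pose I (f : {poly R}) := exists l, (forall x, x \in l -> S x) /\ gen l f.
have I0 : I 0 by exists [::]; split => //; apply: gen0.
have Iadd f g : I f -> I g -> I (f + g).
  move=> [l1 [H1 G1]] [l2 [H2 G2]]; exists (l1 ++ l2); split.
    by move=> x; rewrite mem_cat => /orP[/H1|/H2].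
  apply: gen_add.
    by apply: gen_sub G1 => x Hx; rewrite mem_cat Hx.
  by apply: gen_sub G2 => x Hx; rewrite mem_cat Hx orbT.
have Imul c f : I f -> I (c * f).
  by move=> [l [H G]]; exists l; split => //; apply: gen_mul.
have Igen l f : (forall g, g \in l -> I g) -> gen l f -> I f.
  move=> H; elim=> [|a r z Ha _ IH] //; apply: Iadd => //; apply: Imul; exact: H.
pose L d r := exists f, I f /\ (size f <= d.+1)%N /\ f`_d = r.
have LS d0 r0 : L d0 r0 -> L d0.+1 r0.
  move=> [f [If [Hs Hc]]]; exists ('X * f); split; first exact: Imul.
  split; last by rewrite coefXM.
  by apply: leq_trans (size_mul_leq _ _) _; rewrite size_polyX add2n /= ltnS.
have Lmon d d' r : (d <= d')%N -> L d r -> L d' r.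
  move=> /subnK <-; elim: (d' - d)%N => // k IH H; rewrite addSn; apply: LS; exact: IH.
have Lgen d cs r : (forall c, c \in cs -> L d c) -> gen cs r -> L d r.
  move=> H; elim=> [|a c z Ha _ [f [If [Hs Hc]]]].
    by exists 0; rewrite size_poly0 coef0; split.
  have [g [Ig [Hgs Hgc]]] := H a Ha.
  exists (c%:P * g + f); split; first by apply: Iadd => //; apply: Imul.
  split; last by rewrite coefD coefCM Hgc Hc.
  rewrite (leq_trans (size_add _ _)) // geq_max Hs andbT mul_polyC.
  exact: leq_trans (size_scale_leq _ _) Hgs.
have [rs [Hrs1 Hrs2]] := HR (fun r => exists d, L d r).
pose dd r := epsilon (inhabits 0%N) (fun d => L d r).
have ddP r : (exists d, L d r) -> L (dd r) r.
  exact: (epsilon_spec (inhabits 0%N) (fun d => L d r)).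
pose D := (\sum_(r <- rs) dd r)%N.
have LD d r : L d r -> L D r.
  move=> Hr; apply: (Lgen D rs); last by apply: Hrs2; exists d.
  move=> c Hc; apply: (Lmon (dd c)); last by apply: ddP; apply: Hrs1.
  by rewrite /D (big_rem c Hc) /= leq_addr.
pose cs d := epsilon (inhabits [::]) (fun cs => (forall c, c \in cs -> L d c) /\
  (forall r, L d r -> gen cs r)).
have csP d : (forall c, c \in cs d -> L d c) /\ (forall r, L d r -> gen (cs d) r).
  by apply: (epsilon_spec (inhabits [::]) (fun cs => (forall c, c \in cs -> L d c) /\
  (forall r, L d r -> gen cs r))); apply: HR.
pose w d c := epsilon (inhabits 0) (fun f => I f /\ (size f <= d.+1)%N /\ f`_d = c).
have wP d c : L d c -> I (w d c) /\ (size (w d c) <= d.+1)%N /\ (w d c)`_d = c.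
  exact: (epsilon_spec (inhabits 0) (fun f => I f /\ (size f <= d.+1)%N /\ f`_d = c)).
have liftgen d cs' r : (forall c, c \in cs' -> L d c) -> gen cs' r ->
    exists h, gen (map (w d) cs') h /\ (size h <= d.+1)%N /\ h`_d = r.
  move=> H; elim=> [|a c z Ha _ [f [Gf [Hs Hc]]]].
    by exists 0; rewrite size_poly0 coef0; split => //; apply: gen0.
  have [_ [Hgs Hgc]] := wP d a (H a Ha).
  exists (c%:P * w d a + f); split.
    by apply: genS => //; apply: map_f.
  split; last by rewrite coefD coefCM Hgc Hc.
  rewrite (leq_trans (size_add _ _)) // geq_max Hs andbT mul_polyC.
  exact: leq_trans (size_scale_leq _ _) Hgs.
pose G := flatten [seq map (w d) (cs d) | d <- iota 0 D.+1].
have GI g : g \in G -> I g.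
  move=> /flattenP [s /mapP [d _ ->] /mapP [c Hc ->]].
  by have [] := wP d c ((csP d).1 c Hc).
have subG d : (d <= D)%N -> {subset map (w d) (cs d) <= G}.
  move=> Hd g Hg; apply/flattenP; exists (map (w d) (cs d)) => //.
  by apply/mapP; exists d => //; rewrite mem_iota add0n ltnS.
have claim n (f : {poly R}) : (size f <= n)%N -> I f -> gen G f.
  elim: n f => [|n IH] f Hs If.
    by move: Hs; rewrite leqn0 size_poly_eq0 => /eqP->; apply: gen0.
  case: (leqP (size f) n) => Hsn; first by apply: IH.
  have [d [dn [dD Ld]]] : exists d, (d <= n)%N /\ (d <= D)%N /\ L d f`_n.
    case: (leqP n D) => HnD.
      by exists n; split => //; split => //; exists f.
    exists D; split; first exact: ltnW.
    by split => //; apply: (LD n); exists f.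
  have [h [Gh [Hhs Hhc]]] := liftgen d (cs d) f`_n (csP d).1 ((csP d).2 _ Ld).
  have GGh : gen G h by apply: gen_sub Gh; apply: subG.
  have Ih : I h by apply: Igen GGh.
  pose f' := f + (- 'X^(n - d)) * h.
  have If' : I f' by apply: Iadd => //; apply: Imul.
  have Hf's : (size f' <= n)%N.
    apply: size_le_coef.
      rewrite (leq_trans (size_add _ _)) // geq_max Hs /=.
      apply: leq_trans (size_mul_leq _ _) _.
      rewrite size_opp size_polyXn addSn /=.
      by rewrite (leq_trans (leq_add (leqnn _) Hhs)) // addnS subnK.
    by rewrite coefD mulNr coefN coefXnM ltnNge leq_subr /= subKn // Hhc subrr.
  have -> : f = f' + 'X^(n - d) * h by rewrite /f' mulNr subrK.
  by apply: gen_add; [apply: IH | apply: gen_mul].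
pose lg g := epsilon (inhabits [::]) (fun l => (forall x, x \in l -> S x) /\ gen l g).
have lgP g : g \in G -> (forall x, x \in lg g -> S x) /\ gen (lg g) g.
  by move=> Hg; apply: (epsilon_spec (inhabits [::]) (fun l => (forall x, x \in l -> S x) /\ gen l g)); apply: GI.
exists (flatten (map lg G)); split.
  by move=> x /flattenP [s /mapP [g Hg ->]]; apply: (lgP g Hg).1.
move=> f Sf.
have If : I f by exists [:: f]; split; [move=> x; rewrite inE => /eqP-> | apply: gen_in; rewrite inE].
apply: (gen_trans (l := G)); last by apply: (claim (size f)).
move=> g Hg; apply: gen_sub (lgP g Hg).2 => x Hx.
by apply/flattenP; exists (lg g) => //; apply: map_f.
Qed.
End Hilbert.



Section MP.
Variable K : fieldType.

Fixpoint MP (m : nat) : comNzRingType :=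
  match m with 0 => K | m'.+1 => {poly (MP m')} end.

Fixpoint inj (m : nat) : K -> MP m :=
  match m return K -> MP m with
  | 0 => fun c => c
  | m'.+1 => fun c => (inj m' c)%:P
  end.

Fixpoint var (m : nat) (i : nat) : MP m :=
  match m return MP m with
  | 0 => 0
  | m'.+1 => if i == m' then 'X else (var m' i)%:P
  end.

Variable x : nat -> K.

Fixpoint ev (m : nat) : MP m -> K :=
  match m return MP m -> K with
  | 0 => fun c => c
  | m'.+1 => fun p => @ev m' (p.[inj m' (x m')])
  end.

Lemma ev_add m : forall p q : MP m, ev (p + q) = ev p + ev q.
Proof. elim: m => [|m IH] //= p q; by rewrite hornerD IH. Qed.
Lemma ev_mul m : forall p q : MP m, ev (p * q) = ev p * ev q.
Proof. elim: m => [|m IH] //= p q; by rewrite hornerM IH. Qed.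
Lemma ev_opp m : forall p : MP m, ev (- p) = - ev p.
Proof. elim: m => [|m IH] //= p; by rewrite hornerN IH. Qed.
Lemma ev0 m : ev (0 : MP m) = 0.
Proof. elim: m => [|m IH] //=; by rewrite horner0 IH. Qed.
Lemma ev_inj m c : ev (inj m c) = c.
Proof. elim: m => [|m IH] //=; by rewrite hornerC IH. Qed.
Lemma ev_var m i : (i < m)%N -> ev (var m i) = x i.
Proof.
elim: m => [|m IH] //= Hi; case: eqP => [->|ne]; first by rewrite hornerX ev_inj.
rewrite hornerC IH //; by rewrite ltnS leq_eqVlt in Hi; case/orP: Hi => // /eqP.
Qed.

Lemma Noeth_MP m : Noeth (MP m).
Proof. elim: m => [|m IH] /=; [exact: Noeth_field | exact: Noeth_poly]. Qed.

End MP.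

Section ZeroFin.
Variable K : fieldType.
Variable m : nat.

Fixpoint tr (p : mpoly K m) : MP K m :=
  match p with
  | PVar i => var K m i
  | PConst c => inj m c
  | PAdd p q => tr p + tr q
  | PMul p q => tr p * tr q
  | POpp p => - tr p
  end.

Definition xf (v : 'rV[K]_m) (j : nat) : K :=
  if (insub j : option 'I_m) is Some i then v 0 i else 0.

Lemma meval_tr v p : meval v p = ev (xf v) (tr p).
Proof.
elim: p => /=.
- move=> i; rewrite ev_var // /xf; case: insubP => [i' _ /val_inj -> //|].
  by rewrite ltn_ord.
- by move=> c; rewrite ev_inj.
- by move=> p IHp q IHq; rewrite ev_add IHp IHq.
- by move=> p IHp q IHq; rewrite ev_mul IHp IHq.
- by move=> p IHp; rewrite ev_opp IHp.
Qed.

Lemma zero_fin (S : mpoly K m -> Prop) : exists (k : nat) (q : 'I_k -> mpoly K m),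
  (forall i, S (q i)) /\ forall v, zero_set S v <-> (forall i, meval v (q i) = 0).
Proof.
have [ts [Hts1 Hts2]] := @Noeth_MP K m (fun t => exists p, S p /\ tr p = t).
pose pre t := epsilon (inhabits (PConst m (0:K))) (fun p => S p /\ tr p = t).
have preP t : t \in ts -> S (pre t) /\ tr (pre t) = t.
  by move=> Ht; apply: (epsilon_spec (inhabits (PConst m (0:K))) (fun p => S p /\ tr p = t)); apply: Hts1.
exists (size ts), (fun i => pre (nth 0 ts i)); split.
  by move=> i; apply: (preP _ (mem_nth _ (ltn_ord i))).1.
move=> v; split.
  by move=> Hz i; apply: Hz; apply: (preP _ (mem_nth _ (ltn_ord i))).1.
move=> Hq p Sp; rewrite meval_tr.
have : gen ts (tr p) by apply: Hts2; exists p.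
elim=> [|a r z Ha _ IH]; first by rewrite ev0.
rewrite ev_add ev_mul IH addr0.
have -> : ev (xf v) a = 0; last by rewrite mulr0.
have Hi : (index a ts < size ts)%N by rewrite index_mem.
have := Hq (Ordinal Hi); rewrite /= nth_index // meval_tr (preP a Ha).2 //.
Qed.
End ZeroFin.



Section Defin.
Variable K : closedFieldType.

Definition Def (Q : seq K -> Prop) := exists f : GRing.formula K, forall e, GRing.holds e f <-> Q e.

Lemma Def_ext Q Q' : (forall e, Q e <-> Q' e) -> Def Q -> Def Q'.
Proof. by move=> H [f Hf]; exists f => e; rewrite Hf. Qed.

Lemma Def_and Q1 Q2 : Def Q1 -> Def Q2 -> Def (fun e => Q1 e /\ Q2 e).
Proof. by move=> [f1 H1] [f2 H2]; exists (GRing.And f1 f2) => e /=; rewrite H1 H2. Qed.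

Lemma Def_or Q1 Q2 : Def Q1 -> Def Q2 -> Def (fun e => Q1 e \/ Q2 e).
Proof. by move=> [f1 H1] [f2 H2]; exists (GRing.Or f1 f2) => e /=; rewrite H1 H2. Qed.

Lemma Def_not Q : Def Q -> Def (fun e => ~ Q e).
Proof. by move=> [f H]; exists (GRing.Not f) => e /=; rewrite H. Qed.

Lemma Def_eq t1 t2 : Def (fun e => GRing.eval e t1 = GRing.eval e t2).
Proof. by exists (GRing.Equal t1 t2). Qed.

Lemma Def_all (T : eqType) (s : seq T) (Q : T -> seq K -> Prop) :
  (forall t, Def (Q t)) -> Def (fun e => forall t, t \in s -> Q t e).
Proof.
move=> H; elim: s => [|t s IH].
  by exists (GRing.Bool true) => e /=; split.
apply: Def_ext (Def_and (H t) IH) => e; split.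
  by move=> [H1 H2] t'; rewrite inE => /orP[/eqP->//|]; apply: H2.
by move=> H'; split; [apply: H'; rewrite inE eqxx | move=> t' Ht'; apply: H'; rewrite inE Ht' orbT].
Qed.

Lemma Def_ex (T : eqType) (s : seq T) (Q : T -> seq K -> Prop) :
  (forall t, Def (Q t)) -> Def (fun e => exists2 t, t \in s & Q t e).
Proof.
move=> H; elim: s => [|t s IH].
  by exists (GRing.Bool false) => e /=; split => // -[].
apply: Def_ext (Def_or (H t) IH) => e; split.
  by move=> [H1|[t' H1 H2]]; [exists t; rewrite ?inE ?eqxx | exists t'; rewrite ?inE ?H1 ?orbT].
by move=> [t']; rewrite inE => /orP[/eqP->|H1 H2]; [left | right; exists t'].
Qed.

Lemma Def_allI k (Q : 'I_k -> seq K -> Prop) :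
  (forall t, Def (Q t)) -> Def (fun e => forall t, Q t e).
Proof.
move=> H; apply: Def_ext (Def_all (enum 'I_k) H) => e; split.
  by move=> H' t; apply: H'; rewrite mem_enum.
by move=> H' t _.
Qed.

Lemma Def_exI k (Q : 'I_k -> seq K -> Prop) :
  (forall t, Def (Q t)) -> Def (fun e => exists t, Q t e).
Proof.
move=> H; apply: Def_ext (Def_ex (enum 'I_k) H) => e; split.
  by move=> [t _ Ht]; exists t.
by move=> [t Ht]; exists t; rewrite ?mem_enum.
Qed.

Fixpoint mterm (m o : nat) (p : mpoly K m) : GRing.term K :=
  match p with
  | PVar i => GRing.Var _ (o + i)
  | PConst c => GRing.Const c
  | PAdd p q => GRing.Add (mterm o p) (mterm o q)
  | PMul p q => GRing.Mul (mterm o p) (mterm o q)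
  | POpp p => GRing.Opp (mterm o p)
  end.

Definition blk (m o : nat) (e : seq K) : 'rV[K]_m := \row_(i < m) e`_(o + i).

Lemma mtermP m o (p : mpoly K m) e : GRing.eval e (mterm o p) = meval (blk m o e) p.
Proof. by elim: p => //= [i|p -> q ->|p -> q ->|p ->] //; rewrite mxE. Qed.

Definition DefB m o (Y : 'rV[K]_m -> Prop) := Def (fun e => Y (blk m o e)).

Lemma DefB_ext m o (Y Y' : 'rV[K]_m -> Prop) : (forall v, Y v <-> Y' v) -> DefB o Y -> DefB o Y'.
Proof. by move=> H; apply: Def_ext => e. Qed.

Lemma DefB_zero m o (S : mpoly K m -> Prop) : DefB o (zero_set S).
Proof.
have [k [q [_ Hq]]] := zero_fin S.
apply: (DefB_ext (fun v => iff_sym (Hq v))).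
apply: (Def_allI (Q := fun i e => meval (blk m o e) (q i) = 0)) => i.
apply: (Def_ext _ (Def_eq (mterm o (q i)) (GRing.Const 0))) => e.
by rewrite mtermP.
Qed.

Lemma DefB_closed m o (A C : 'rV[K]_m -> Prop) : DefB o A -> closed_in A C -> DefB o C.
Proof.
move=> HA [S HS]; apply: (DefB_ext (fun v => iff_sym (HS v))).
exact: Def_and HA (DefB_zero o S).
Qed.

Lemma DefB_cons m o (A X : 'rV[K]_m -> Prop) : algebraic_set A -> constructible_in A X -> DefB o X.
Proof.
move=> [SA HA] [k [L [HL HX]]].
have DA : DefB o A by apply: (DefB_ext (fun v => iff_sym (HA v))); apply: DefB_zero.
apply: (DefB_ext (fun v => iff_sym (HX v))).
apply: (Def_exI (Q := fun i e => L i (blk m o e))) => i.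
have [U [C [[C' [HC' HU]] [HC HLi]]]] := HL i.
apply: (DefB_ext (fun v => iff_sym (HLi v))).
apply: Def_and; last exact: DefB_closed HC.
apply: (DefB_ext (fun v => iff_sym (HU v))).
by apply: Def_and => //; apply: Def_not; apply: DefB_closed HC'.
Qed.

Lemma cons_sub m (A X : 'rV[K]_m -> Prop) v : constructible_in A X -> X v -> A v.
Proof.
move=> [k [L [HL HX]]] /HX [i]; have [U [C [_ [[S HS] HLi]]]] := HL i.
by move=> /HLi [_ /HS []].
Qed.

Lemma Def_map a b oa ob (P : 'I_b -> mpoly K a) :
  Def (fun e => blk b ob e = poly_map P (blk a oa e)).
Proof.
apply: (Def_ext (Q := fun e => forall j : 'I_b, GRing.eval e (GRing.Var _ (ob + j)) =
   GRing.eval e (mterm oa (P j)))).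
  move=> e; split => [H|H].
    by apply/rowP => j; rewrite !mxE; move: (H j) => /= ->; rewrite mtermP.
  by move=> j; move/rowP: H => /(_ j); rewrite !mxE /= mtermP.
by apply: Def_allI => j; apply: Def_eq.
Qed.
End Defin.



Section Core.
Variable K : closedFieldType.
Hypothesis HK : uncountable K.

Lemma core (P : nat -> K -> Prop) :
  (forall k, FC (P k)) -> (forall k a, P k.+1 a -> P k a) ->
  (forall k, exists a, P k a) -> exists a, forall k, P k a.
Proof.
move=> HFC Hdec Hne.
have Hmon k k' a : (k <= k')%N -> P k' a -> P k a.
  move=> /subnK <-; elim: (k' - k)%N => [|n IH] //= H.
  by apply: IH; apply: Hdec; rewrite addSn in H.
apply: NNPP => Hno.
have Hk : forall a, exists k, ~ P k a.
  move=> a; apply: NNPP => H; apply: Hno; exists a => k.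
  by apply: NNPP => Hk; apply: H; exists k.
pose kk a := proj1_sig (constructive_indefinite_description _ (Hk a)).
have kkP a : ~ P (kk a) a.
  exact (proj2_sig (constructive_indefinite_description _ (Hk a))).
case: (classic (exists k (l : seq K), forall a, P k a <-> a \in l)) => [[k [l Hl]]|Hfin].
  pose M := (k + \sum_(a <- l) kk a)%N.
  have [a Ha] := Hne M.
  have al : a \in l by apply/Hl; apply: (Hmon k M) => //; rewrite leq_addr.
  apply: (kkP a); apply: (Hmon _ M) => //.
  by rewrite /M (big_rem a al) /= addnCA leq_addr.
have Hco : forall k : nat, exists l : seq K, forall a, P k a <-> a \notin l.
  move=> k; have [l [b Hl]] := HFC k; case: b Hl => Hl.
    by exists l; move=> a; rewrite Hl; case: (a \in l).
  by case: Hfin; exists k, l; move=> a; rewrite Hl; case: (a \in l).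
pose ll k := proj1_sig (constructive_indefinite_description _ (Hco k)).
have llP k : forall a, P k a <-> a \notin ll k.
  exact (proj2_sig (constructive_indefinite_description _ (Hco k))).
apply: HK.
exists (fun n => match (unpickle n : option (nat * nat)) with
                 | Some (k, j) => nth 0 (ll k) j | None => 0 end).
move=> a; exists (pickle (kk a, index a (ll (kk a)))); rewrite pickleK.
apply: nth_index; apply: NNPP => /negP H; apply: (kkP a); exact/llP.
Qed.

Fixpoint Theta (th : nat -> GRing.formula K) (k : nat) : GRing.formula K :=
  if k is k'.+1 then GRing.And (Theta th k') (th k) else th 0%N.

Lemma ThetaP th k e : GRing.holds e (Theta th k) <-> forall j, (j <= k)%N -> GRing.holds e (th j).
Proof.
elim: k => [|k IH] /=.
  by split=> [H [|j] //|H]; apply: H.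
rewrite IH; split=> [[H1 H2] j|H]; last first.
  by split=> [j Hj|]; apply: H => //; apply: leqW.
by rewrite leq_eqVlt => /orP[/eqP->//|]; apply: H1.
Qed.

Lemma realize (th : nat -> GRing.formula K) :
  (forall k, exists e, forall j, (j <= k)%N -> GRing.holds e (th j)) ->
  exists g : nat -> K, forall j N, (ub_form (th j) <= N)%N -> GRing.holds (mkseq g N) (th j).
Proof.
move=> Hsat.
pose Inv (s : seq K) := forall k, exists e, (forall j, (j < size s)%N -> e`_j = s`_j) /\
   GRing.holds e (Theta th k).
have Inv0 : Inv [::] by move=> k; have [e He] := Hsat k; exists e; split => //; apply/ThetaP.
have step : forall s, Inv s -> exists a, Inv (rcons s a).
  move=> s Hs; set i := size s.
  pose P k a := exists e, (forall j, (j < i)%N -> e`_j = s`_j) /\ e`_i = a /\ GRing.holds e (Theta th k).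
  have [a Ha] : exists a, forall k, P k a.
    apply: core.
    - move=> k; set B := ub_form (Theta th k).
      apply: (FC_ext _ (FC_holds s (foldr GRing.Exists (Theta th k) (iota i.+1 B)))) => a.
      rewrite -GRing.foldExistsP; split.
      + case=> e' He' Hh; exists e'; split; last split.
        * move=> j Hj; rewrite -He'; first by rewrite nth_rcons Hj.
          by rewrite !inE mem_iota negb_and -ltnNge ltnS ltnW.
        * rewrite -He'; first by rewrite nth_rcons ltnn eqxx.
          by rewrite !inE mem_iota ltnn.
        * done.
      + case=> e [He1 [He2 Hh]].
        exists (mkseq (fun j => e`_j) (i.+1 + B)).
        * move=> j; rewrite !inE mem_iota negb_and -ltnNge -leqNgt => Hj.
          case: (ltnP j (i.+1 + B)) => Hj2.
          - have Hji : (j < i.+1)%N by case/orP: Hj => //; rewrite leqNgt Hj2.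
            rewrite nth_mkseq // nth_rcons; case: ltnP => H1; first by rewrite He1.
            have -> : j = i by apply/eqP; rewrite eqn_leq H1 -ltnS Hji.
            by rewrite eqxx He2.
          - rewrite !nth_default // ?size_mkseq // size_rcons.
            by apply: leq_trans Hj2; rewrite leq_addr.
        * apply/(holds_agree (e := e)) => // j Hj.
          by rewrite nth_mkseq ?(leq_trans Hj) // leq_addl.
    - move=> k a [e [H1 [H2 H3]]]; exists e; split => //; split => //.
      by case: H3.
    - move=> k; have [e [H1 H2]] := Hs k; exists e`_i, e; split => //.
  exists a => k; have [e [H1 [H2 H3]]] := Ha k; exists e; split => //.
  move=> j; rewrite size_rcons ltnS leq_eqVlt nth_rcons => /orP[/eqP->|Hj].
    by rewrite ltnn eqxx.
  by rewrite Hj H1.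
pose pick s := epsilon (inhabits (0:K)) (fun a => Inv (rcons s a)).
have pickP s : Inv s -> Inv (rcons s (pick s)).
  move=> Hs; have [a Ha] := step s Hs.
  exact (epsilon_spec (inhabits (0:K)) (fun a => Inv (rcons s a)) (ex_intro _ a Ha)).
pose fix gs n := if n is n'.+1 then rcons (gs n') (pick (gs n')) else [::].
have gsInv n : Inv (gs n) by elim: n => //= n IH; apply: pickP.
have size_gs n : size (gs n) = n by elim: n => //= n IH; rewrite size_rcons IH.
have gs_pre n m j : (n <= m)%N -> (j < n)%N -> (gs m)`_j = (gs n)`_j.
  move=> /subnK <-; elim: (m - n)%N => //= p IH Hj.
  by rewrite nth_rcons size_gs ltn_addl // IH.
pose g j := (gs j.+1)`_j.
have gsE N : mkseq g N = gs N.
  apply: (@eq_from_nth _ 0); rewrite size_mkseq ?size_gs // => j Hj.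
  by rewrite nth_mkseq // (gs_pre j.+1 N).
exists g => j N HN; rewrite gsE.
have [e [He Hh]] := gsInv N j.
move/ThetaP: Hh => /(_ j (leqnn j)) Hh.
apply: (proj1 (holds_agree (f:=th j) (e:=e) (e':=gs N) _) Hh) => j' Hj'.
by rewrite He // size_gs; apply: leq_trans Hj' HN.
Qed.
End Core.



Lemma xfE (K : fieldType) m (v : 'rV[K]_m) (i : 'I_m) : xf v i = v 0 i.
Proof. by rewrite /xf; case: insubP => [i' _ /val_inj -> //|]; rewrite ltn_ord. Qed.

Section Env.
Variable K : closedFieldType.
Variable d : nat -> nat.
Definition off n := (\sum_(j < n) d j)%N.
Lemma offS n : off n.+1 = (off n + d n)%N.
Proof. by rewrite /off big_ord_recr. Qed.
Lemma off_mon n m : (n <= m)%N -> (off n <= off m)%N.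
Proof.
move=> /subnK <-; elim: (m - n)%N => // k IH.
by rewrite addSn offS (leq_trans IH) // leq_addr.
Qed.

Variable vs : forall n, 'rV[K]_(d n).
Fixpoint eb k : seq K := if k is k'.+1 then eb k' ++ mkseq (xf (vs k')) (d k') else [::].
Lemma size_eb k : size (eb k) = off k.
Proof. elim: k => [|k IH] /=; first by rewrite /off big_ord0. by rewrite size_cat IH size_mkseq offS. Qed.

Lemma blk_eb k n : (n < k)%N -> blk (d n) (off n) (eb k) = vs n.
Proof.
move=> Hnk; apply/rowP => i; rewrite mxE.
elim: k Hnk => // k IH; rewrite ltnS leq_eqVlt => /orP[/eqP Hn|Hnk] /=.
  subst k.
  by rewrite nth_cat size_eb ltnNge leq_addr /= addKn nth_mkseq // xfE.
rewrite nth_cat size_eb ifT ?IH //.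
by rewrite (leq_trans _ (off_mon Hnk)) // offS ltn_add2l.
Qed.
End Env.

Theorem theorem4p2 (K : closedFieldType) (HK : uncountable K)
  (d : nat -> nat)
  (A : forall n : nat, 'rV[K]_(d n) -> Prop)
  (F : forall n m : nat, 'rV[K]_(d m) -> 'rV[K]_(d n))
  (X : forall n : nat, 'rV[K]_(d n) -> Prop) :
  (forall n, algebraic_set (A n)) ->
  (forall n m, (n <= m)%N -> regular_map (A m) (A n) (F n m)) ->
  (forall n x, A n x -> F n n x = x) ->
  (forall n m k, (n <= m)%N -> (m <= k)%N ->
     forall x, A k x -> F n k x = F n m (F m k x)) ->
  (forall n, constructible_in (A n) (X n)) ->
  (forall n m, (n <= m)%N -> forall x, X m x -> X n (F n m x)) ->
  (forall n, exists x, X n x) ->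
  exists x : forall n, 'rV[K]_(d n),
    (forall n, X n (x n)) /\
    (forall n m, (n <= m)%N -> x n = F n m (x m)).
Proof.
move=> HA HF Hid Hcomp HX HXF Hne.
have HPP n : exists P : 'I_(d n) -> mpoly K (d n.+1),
    forall v, A n.+1 v -> F n n.+1 v = poly_map P v.
  by have [_ [P HP]] := HF n n.+1 (leqnSn n); exists P.
pose PP n := proj1_sig (constructive_indefinite_description _ (HPP n)).
have PPP n : forall v, A n.+1 v -> F n n.+1 v = poly_map (PP n) v.
  exact (proj2_sig (constructive_indefinite_description _ (HPP n))).
have Hth n : Def (fun e => X n (blk (d n) (off d n) e) /\
    blk (d n) (off d n) e = poly_map (PP n) (blk (d n.+1) (off d n.+1) e)).
  by apply: Def_and; [apply: DefB_cons | apply: Def_map].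
pose th n := proj1_sig (constructive_indefinite_description _ (Hth n)).
have thP n : forall e, GRing.holds e (th n) <-> (X n (blk (d n) (off d n) e) /\
    blk (d n) (off d n) e = poly_map (PP n) (blk (d n.+1) (off d n.+1) e)).
  exact (proj2_sig (constructive_indefinite_description _ (Hth n))).
have XA n v : X n v -> A n v by apply: cons_sub.
have [g Hg] : exists g : nat -> K, forall j N, (ub_form (th j) <= N)%N ->
    GRing.holds (mkseq g N) (th j).
  apply: realize => // k.
  have [y Hy] := Hne k.+1.
  pose vs n := F n k.+1 y.
  exists (eb vs k.+2) => j Hj; apply/thP.
  have Hj2 : (j < k.+2)%N by rewrite ltnS (leq_trans Hj).
  have Hj3 : (j.+1 < k.+2)%N by rewrite !ltnS.
  rewrite !blk_eb //; split; first by apply: HXF => //; apply: leqW.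
  rewrite -PPP; last by apply: XA; apply: HXF.
  by rewrite /vs (Hcomp j j.+1 k.+1) //; apply: XA.
pose x n : 'rV[K]_(d n) := \row_(i < d n) g (off d n + i).
have blkx n N : (off d n.+1 <= N)%N -> blk (d n) (off d n) (mkseq g N) = x n.
  move=> HN; apply/rowP => i; rewrite !mxE nth_mkseq //.
  by apply: leq_trans HN; rewrite offS ltn_add2l.
have Hx j : X j (x j) /\ x j = poly_map (PP j) (x j.+1).
  have := Hg j (maxn (ub_form (th j)) (off d j.+2)) (leq_maxl _ _).
  move/thP; rewrite !blkx //.
  - by rewrite leq_max leqnn orbT.
  - by rewrite leq_max (off_mon d (leqnSn j.+1)) orbT.
have HXx n : X n (x n) by case: (Hx n).
exists x; split => // n m Hnm.
rewrite -(subnK Hnm); elim: (m - n)%N => [|k IH] /=.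
  by rewrite add0n Hid //; apply: XA.
rewrite addSn IH (Hcomp n (k + n) (k + n).+1) ?leq_addl //; last exact: XA.
congr (F _ _ _); rewrite PPP; last exact: XA.
by case: (Hx (k + n)).
Qed.
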